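(* Suppose the $L$-smoothness assumption holds and let $\{w_t\}$, $\{v_t\}$, $\{\hat D_t\}$ be generated by {\tt Scaled SARAH} with probability $p\in(0,1]$. Then for every $t\ge0$, $$\mathbb{E}\left[\|v_{t+1}-\nabla P(w_{t+1})\|^2\right]\le(1-p)\,\mathbb{E}\left[\|v_t-\nabla P(w_t)\|^2\right]+\frac{(1-p)L^2}{\alpha}\mathbb{E}\left[\|w_{t+1}-w_t\|^2_{\hat D_t}\right].$$
   Context: $P=\frac1n\sum_{i=1}^nf_i$ with $f_i:\mathbb{R}^d\to\mathbb{R}$. $L$-smoothness assumption: each $f_i$ and $P$ are twice differentiable with $L$-Lipschitz gradients. $\|x\|_D^2=x^TDx$. For $J\subseteq[n]$, $\nabla^2P_J(w)=\frac1{|J|}\sum_{j\in J}\nabla^2 f_j(w)$; $\odot$ is the Hadamard product; $\mathrm{diag}(x)$ is the diagonal matrix with the entries of $x$. Preconditioner (parameters $\alpha>0$, $\beta\in(0,1)$, $m\ge1$): $D_0=\frac1m\sum_{j=1}^m\mathrm{diag}(z_j\odot\nabla^2P_{\mathcal{J}_j}(w_0)z_j)$, $D_t=\beta D_{t-1}+(1-\beta)\mathrm{diag}(z_t\odot\nabla^2P_{\mathcal{J}_t}(w_t)z_t)$ for $t\ge1$, with independent Rademacher vectors $z$ and random index sets $\mathcal{J}\subseteq[n]$, independent of the gradient samples; $\hat D_t$ diagonal with $(\hat D_t)_{ii}=\max\{\alpha,|(D_t)_{ii}|\}$. {\tt Scaled SARAH} (input $w_0$, step-size $\eta>0$, $p$):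 $v_0=\nabla P(w_0)$; for $t\ge0$: $w_{t+1}=w_t-\eta\hat D_t^{-1}v_t$; draw $i_{t+1}$ uniformly from $[n]$, independently of everything else; with probability $p$ (independent coin), $v_{t+1}=\nabla P(w_{t+1})$, otherwise $v_{t+1}=v_t+\nabla f_{i_{t+1}}(w_{t+1})-\nabla f_{i_{t+1}}(w_t)$; update $\hat D_{t+1}$. *)

(* Defs.v *)
From HB Require Import structures.
From mathcomp Require Import all_boot all_order all_algebra.
From mathcomp Require Import all_classical all_reals all_analysis.
Set Implicit Arguments. Unset Strict Implicit. Unset Printing Implicit Defensive.
Import Order.TTheory GRing.Theory Num.Theory.
Import numFieldNormedType.Exports.
Local Open Scope ring_scope.
Local Open Scope classical_set_scope.

Definition sqnorm (R : realType) (d : nat) (x : 'rV[R]_d) : R :=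
  \sum_(k < d) (x 0 k) ^+ 2.

Definition enorm (R : realType) (d : nat) (x : 'rV[R]_d) : R := Num.sqrt (sqnorm x).

Definition Dnorm2 (R : realType) (d : nat) (D : 'M[R]_d) (x : 'rV[R]_d) : R :=
  (x *m D *m x^T) 0 0.

Definition grad (R : realType) (d : nat) (f : 'rV[R]_d -> R) (x : 'rV[R]_d) : 'rV[R]_d :=
  \row_(k < d) 'D_(delta_mx 0 k) f x.

(* Hessian: (hess f x) k l = d/dx_l (d f/dx_k)(x). *)
Definition hess (R : realType) (d : nat) (f : 'rV[R]_d -> R) (x : 'rV[R]_d) : 'M[R]_d :=
  ('J (grad f) x)^T.

Definition twice_diff_Lsmooth (R : realType) (d : nat) (L : R) (f : 'rV[R]_d -> R) : Prop :=
  (forall x, differentiable f x) /\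
  (forall x, differentiable (grad f) x) /\
  (forall x y, enorm (grad f x - grad f y) <= L * enorm (x - y)).

Definition Pobj (R : realType) (d n : nat) (f : 'I_n -> 'rV[R]_d -> R) : 'rV[R]_d -> R :=
  fun w => n%:R^-1 * \sum_(i < n) f i w.

Definition hessPJ (R : realType) (d n : nat) (f : 'I_n -> 'rV[R]_d -> R)
  (J : {set 'I_n}) (w : 'rV[R]_d) : 'M[R]_d :=
  #|J|%:R^-1 *: \sum_(j in J) hess (f j) w.

Definition radvec {R : realType} (d : nat) (s : {ffun 'I_d -> bool}) : 'rV[R]_d :=
  \row_(k < d) (if s k then 1 else -1).

Definition diag_hvp (R : realType) (d : nat) (z : 'rV[R]_d) (H : 'M[R]_d) : 'M[R]_d :=
  diag_mx (\row_(k < d) (z 0 k * (H *m z^T) k 0)).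

Definition Dhat (R : realType) (d : nat) (alpha : R) (D : 'M[R]_d) : 'M[R]_d :=
  \matrix_(i < d, j < d) (if i == j then Num.max alpha `|D i i| else 0).

Definition D_init (R : realType) (d n m : nat) (f : 'I_n -> 'rV[R]_d -> R)
  (z0 : 'I_m -> {ffun 'I_d -> bool}) (J0 : 'I_m -> {set 'I_n}) (w0 : 'rV[R]_d) : 'M[R]_d :=
  m%:R^-1 *: \sum_(j < m) diag_hvp (radvec (z0 j)) (hessPJ f (J0 j) w0).

(* Scaled SARAH run on a fixed realization of all random choices:
   z0, J0 : the m samples used in D_0;  zs t, Js t : the samples used in D_t (t >= 1);
   idx t, coin t : the index i_t and the coin at step t (t >= 1; coin = true means
   "with probability p" branch, i.e. full gradient). *)
Fixpoint sarah (R : realType) (d n m : nat) (f : 'I_n -> 'rV[R]_d -> R)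
  (alpha beta eta : R) (w0 : 'rV[R]_d)
  (z0 : 'I_m -> {ffun 'I_d -> bool}) (J0 : 'I_m -> {set 'I_n})
  (zs : nat -> {ffun 'I_d -> bool}) (Js : nat -> {set 'I_n})
  (idx : nat -> 'I_n) (coin : nat -> bool) (t : nat)
  : 'rV[R]_d * 'rV[R]_d * 'M[R]_d :=
  match t with
  | 0 => (w0, grad (Pobj f) w0, D_init f z0 J0 w0)
  | s.+1 =>
      let: (w, v, D) := sarah f alpha beta eta w0 z0 J0 zs Js idx coin s in
      let w' := w - eta *: (invmx (Dhat alpha D) *m v^T)^T in
      let i := idx s.+1 in
      let v' := if coin s.+1 then grad (Pobj f) w'
                else v + grad (f i) w' - grad (f i) w in
      let D' := beta *: D + (1 - beta) *: diag_hvp (radvec (zs s.+1)) (hessPJ f (Js s.+1) w') in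
      (w', v', D')
  end.

Definition history (T : Type) (d n m : nat)
  (z0 : 'I_m -> T -> {ffun 'I_d -> bool}) (J0 : 'I_m -> T -> {set 'I_n})
  (zs : nat -> T -> {ffun 'I_d -> bool}) (Js : nat -> T -> {set 'I_n})
  (idx : nat -> T -> 'I_n) (coin : nat -> T -> bool) (t : nat) (om : T)
  : {ffun 'I_m -> {ffun 'I_d -> bool} * {set 'I_n}} *
    {ffun 'I_t -> ({ffun 'I_d -> bool} * {set 'I_n}) * ('I_n * bool)} :=
  ([ffun j => (z0 j om, J0 j om)],
   [ffun s : 'I_t => ((zs s.+1 om, Js s.+1 om), (idx s.+1 om, coin s.+1 om))]).

(* A random element with values in a (finite) type is measurable w.r.t. the discrete
   sigma-algebra on its codomain. *)
Definition rv_measurable (dT : measure_display) (T : measurableType dT) (V : Type)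
  (X : T -> V) : Prop :=
  forall A : set V, measurable (X @^-1` A).

(* Main.v *)
Require Import Defs.
From HB Require Import structures.
From mathcomp Require Import all_boot all_order all_algebra.
From mathcomp Require Import all_classical all_reals all_analysis.
Import Order.TTheory GRing.Theory Num.Theory.
Import numFieldNormedType.Exports.
Local Open Scope ring_scope.
Local Open Scope classical_set_scope.

From mathcomp Require Import measurable_realfun.
From mathcomp.algebra_tactics Require Import ring lra.

Section Helpers.
Set Implicit Arguments. Unset Strict Implicit.
Lemma int_fin (R : realType) (dT : measure_display) (Omega : measurableType dT)
  (mu : probability Omega R) (K : finType) (X : Omega -> K) (G : K -> R) :
  (forall k, measurable (X @^-1` [set k])) -> (forall k, 0 <= G k) ->
  (\int[mu]_om (G (X om))%:E = \sum_(k : K) (G k)%:E * mu (X @^-1` [set k]))%E.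
Proof.
move=> mX G0.
transitivity (\int[mu]_om \sum_(k : K) (G k * \1_(X @^-1` [set k]) om)%:E)%E.
  apply: eq_integral => om _.
  rewrite (bigD1 (X om)) //= indicE.
  have -> : om \in X @^-1` [set X om] by rewrite inE.
  rewrite mulr1 big1 ?adde0 // => k kX.
  rewrite indicE.
  have -> : om \in X @^-1` [set k] = false.
    apply/negbTE; rewrite notin_setE /= => Xk; by rewrite Xk eqxx in kX.
  by rewrite mulr0.
rewrite ge0_integral_sum //; last first.
- move=> k x _; rewrite lee_fin; apply: mulr_ge0 => //.
- move=> k; apply/measurable_EFinP.
  apply: measurable_funM; first exact: measurable_cst.
  exact: measurable_indic.
apply: eq_bigr => k _.
under eq_integral do rewrite EFinM.
by rewrite ge0_integralZl_EFin // ?integral_indic // ?setIT //; apply/measurable_EFinP; exact: measurable_indic.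
Qed.
Lemma sqnorm_ge0 (R : realType) (d : nat) (x : 'rV[R]_d) : 0 <= sqnorm x.
Proof. by apply: sumr_ge0 => k _; exact: sqr_ge0. Qed.

Lemma lip_sq (R : realType) (d : nat) (L : R) (u w : 'rV[R]_d) :
  enorm u <= L * enorm w -> sqnorm u <= L ^+ 2 * sqnorm w.
Proof.
rewrite /enorm => H.
have a0 := sqrtr_ge0 (sqnorm u).
have b0 := sqrtr_ge0 (sqnorm w).
rewrite -(sqr_sqrtr (sqnorm_ge0 u)) -(sqr_sqrtr (sqnorm_ge0 w)).
set a := Num.sqrt _ in H a0 *; set b := Num.sqrt _ in H b0 *.
have Lb0 : 0 <= L * b by exact: le_trans H.
rewrite -exprMn; nra.
Qed.

Lemma Dnorm_ge (R : realType) (d : nat) (alpha : R) (D : 'M[R]_d) (x : 'rV[R]_d) :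
  0 < alpha -> alpha * sqnorm x <= Dnorm2 (Dhat alpha D) x.
Proof.
move=> a0; rewrite /Dnorm2 /sqnorm mxE big_distrr /=.
apply: ler_sum => j _.
rewrite !mxE (bigD1 j) //= big1; last first.
  by move=> i /negbTE ij; rewrite !mxE ij mulr0.
rewrite addr0 !mxE eqxx.
rewrite [X in _ <= X](_ : _ = Num.max alpha `|D j j| * x 0 j ^+ 2); last by ring.
apply: ler_wpM2r; first exact: sqr_ge0.
by rewrite le_max lexx.
Qed.

Lemma var_ineq (R : realType) (n : nat) (a : R) (x : 'I_n -> R) : (0 < n)%N ->
  n%:R^-1 * \sum_(i < n) (a + x i - n%:R^-1 * \sum_(j < n) x j) ^+ 2
  <= a ^+ 2 + n%:R^-1 * \sum_(i < n) x i ^+ 2.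
Proof.
move=> n0.
set S := \sum_(j < n) x j; set Q := \sum_(i < n) x i ^+ 2.
set nr := n%:R : R; set y := nr^-1 * S.
have nr0 : nr != 0 by rewrite /nr pnatr_eq0 -lt0n.
have E : \sum_(i < n) (a + x i - y) ^+ 2 =
   \sum_(i < n) ((a - y) ^+ 2 + (2 * (a - y)) * x i + x i ^+ 2).
  by apply: eq_bigr => i _; ring.
rewrite E !big_split /= sumr_const card_ord -big_distrr /= -/S -/Q.
have SE : S = nr * y by rewrite /y mulrA mulfV ?mul1r.
rewrite SE -[_ *+ n]mulr_natl -/nr.
have -> : nr^-1 * (nr * (a - y) ^+ 2 + 2 * (a - y) * (nr * y) + Q)
   = a ^+ 2 - y ^+ 2 + nr^-1 * Q by field.
have := sqr_ge0 y; lra.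
Qed.
Lemma grad_P (R : realType) (d n : nat) (f : 'I_n -> 'rV[R]_d -> R) x :
  (forall i, differentiable (f i) x) ->
  grad (Pobj f) x = n%:R^-1 *: \sum_(i < n) grad (f i) x.
Proof.
move=> df.
have -> : Pobj f = n%:R^-1 \*: (\sum_(i < n) f i).
  by apply/funext => w; rewrite /Pobj /= fct_sumE.
apply/rowP => k; rewrite !mxE summxE.
rewrite deriveZ; last by apply: derivable_sum => i; exact: diff_derivable.
rewrite derive_sum; last by move=> i; exact: diff_derivable.
by congr (_ * _); apply: eq_bigr => i _; rewrite mxE.
Qed.

Lemma vec_ineq (R : realType) (d n : nat) (a : 'rV[R]_d) (X : 'I_n -> 'rV[R]_d) :
  (0 < n)%N ->
  n%:R^-1 * \sum_(i < n) sqnorm (a + X i - n%:R^-1 *: \sum_(j < n) X j)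
  <= sqnorm a + n%:R^-1 * \sum_(i < n) sqnorm (X i).
Proof.
move=> n0; rewrite /sqnorm (exchange_big _ _ _ _ _ (fun i k => (X i 0 k) ^+ 2)).
rewrite (exchange_big _ _ _ _ _ (fun i k => ((a + X i - n%:R^-1 *: \sum_(j < n) X j) 0 k) ^+ 2)).
rewrite !big_distrr -big_split /=.
apply: ler_sum => k _.
under eq_bigr do rewrite !mxE summxE.
exact: var_ineq.
Qed.

Lemma step_bound (R : realType) (d n : nat) (f : 'I_n -> 'rV[R]_d -> R) (L alpha : R)
  (V W W' : 'rV[R]_d) (D : 'M[R]_d) :
  (0 < n)%N -> 0 < alpha -> (forall i, twice_diff_Lsmooth L (f i)) ->
  n%:R^-1 * \sum_(i < n) sqnorm (V + grad (f i) W' - grad (f i) W - grad (Pobj f) W')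
  <= sqnorm (V - grad (Pobj f) W) + L ^+ 2 / alpha * Dnorm2 (Dhat alpha D) (W' - W).
Proof.
move=> n0 a0 HfL.
have dfi : forall x i, differentiable (f i) x by move=> x i; case: (HfL i).
rewrite !grad_P //.
set a := V - _.
pose X i := grad (f i) W' - grad (f i) W.
have -> : \sum_(i < n) sqnorm (V + grad (f i) W' - grad (f i) W -
      n%:R^-1 *: \sum_(i0 < n) grad (f i0) W')
   = \sum_(i < n) sqnorm (a + X i - n%:R^-1 *: \sum_(j < n) X j).
  apply: eq_bigr => i _; congr sqnorm.
  rewrite /X /a sumrB.
  set A := \sum_(j < n) _; set B := \sum_(j < n) _.
  by apply/rowP => k; rewrite !mxE; ring.
apply: le_trans (vec_ineq a X n0) _.
rewrite lerD2l.
have sq0 := sqnorm_ge0 (W' - W).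
have H1 : n%:R^-1 * \sum_(i < n) sqnorm (X i) <= L ^+ 2 * sqnorm (W' - W).
  have -> : L ^+ 2 * sqnorm (W' - W) = n%:R^-1 * \sum_(i < n) (L ^+ 2 * sqnorm (W' - W)).
    rewrite sumr_const card_ord.
    have -> : (L ^+ 2 * sqnorm (W' - W)) *+ n = n%:R * (L ^+ 2 * sqnorm (W' - W)) by rewrite mulr_natl.
    rewrite -mulrA mulKf //.
    by rewrite pnatr_eq0 -lt0n.
  rewrite ler_pM2l ?invr_gt0 ?ltr0n //.
  apply: ler_sum => i _; apply: lip_sq.
  by case: (HfL i) => _ [_ ->].
apply: le_trans H1 _.
have H2 := Dnorm_ge D (W' - W) a0.
rewrite -mulrA; apply: ler_wpM2l; first exact: sqr_ge0.
by rewrite -(ler_pM2l a0) mulrA mulfV ?gt_eqF // mul1r.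
Qed.
Lemma sarah_ext (R : realType) (d n m : nat) (f : 'I_n -> 'rV[R]_d -> R)
  (alpha beta eta : R) (w0 : 'rV[R]_d) z0 J0 zs Js idx coin zs' Js' idx' coin' t :
  (forall s, (0 < s <= t)%N -> zs s = zs' s /\ Js s = Js' s /\ idx s = idx' s /\ coin s = coin' s) ->
  @sarah R d n m f alpha beta eta w0 z0 J0 zs Js idx coin t =
  @sarah R d n m f alpha beta eta w0 z0 J0 zs' Js' idx' coin' t.
Proof.
elim: t => [//|t IH] H /=.
rewrite IH; last by move=> s /andP[s0 st]; apply: H; rewrite s0 (leq_trans st).
have [-> [-> [-> ->]]] := H t.+1 (leqnn _).
by [].
Qed.

Definition hz (d n t : nat) (h : {ffun 'I_t -> ({ffun 'I_d -> bool} * {set 'I_n}) * ('I_n * bool)})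
  (s : nat) : {ffun 'I_d -> bool} :=
  if (insub s.-1 : option 'I_t) is Some j then (h j).1.1 else [ffun=> false].
Definition hJ (d n t : nat) (h : {ffun 'I_t -> ({ffun 'I_d -> bool} * {set 'I_n}) * ('I_n * bool)})
  (s : nat) : {set 'I_n} :=
  if (insub s.-1 : option 'I_t) is Some j then (h j).1.2 else finset.set0.
Definition hi (d n t : nat) (i0 : 'I_n) (h : {ffun 'I_t -> ({ffun 'I_d -> bool} * {set 'I_n}) * ('I_n * bool)})
  (s : nat) : 'I_n :=
  if (insub s.-1 : option 'I_t) is Some j then (h j).2.1 else i0.
Definition hc (d n t : nat) (h : {ffun 'I_t -> ({ffun 'I_d -> bool} * {set 'I_n}) * ('I_n * bool)})
  (s : nat) : bool :=
  if (insub s.-1 : option 'I_t) is Some j then (h j).2.2 else false.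

Lemma sarah_hist (R : realType) (d n m : nat) (f : 'I_n -> 'rV[R]_d -> R)
  (alpha beta eta : R) (w0 : 'rV[R]_d) (T : Type)
  (z0 : 'I_m -> T -> {ffun 'I_d -> bool}) (J0 : 'I_m -> T -> {set 'I_n})
  (zs : nat -> T -> {ffun 'I_d -> bool}) (Js : nat -> T -> {set 'I_n})
  (idx : nat -> T -> 'I_n) (coin : nat -> T -> bool) (t : nat) (i0 : 'I_n) (om : T) :
  sarah f alpha beta eta w0 (fun j => z0 j om) (fun j => J0 j om)
    (fun s => zs s om) (fun s => Js s om) (fun s => idx s om) (fun s => coin s om) t =
  let h := history z0 J0 zs Js idx coin t om in
  sarah f alpha beta eta w0 (fun j => (h.1 j).1) (fun j => (h.1 j).2)
    (hz h.2) (hJ h.2) (hi i0 h.2) (hc h.2) t.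
Proof.
rewrite /history /=.
have -> : (fun j => ([ffun j0 => (z0 j0 om, J0 j0 om)] j).1) = (fun j => z0 j om).
  by apply/funext => j; rewrite ffunE.
have -> : (fun j => ([ffun j0 => (z0 j0 om, J0 j0 om)] j).2) = (fun j => J0 j om).
  by apply/funext => j; rewrite ffunE.
apply: sarah_ext => s /andP[s0 st].
rewrite /hz /hJ /hi /hc.
case: insubP => [j _ jv|]; last by move=> /negP []; case: s s0 st.
rewrite ffunE /= jv prednK //.
Qed.

Lemma sarahS (R : realType) (d n m : nat) (f : 'I_n -> 'rV[R]_d -> R)
  (alpha beta eta : R) (w0 : 'rV[R]_d) z0 J0 zs Js idx coin t :
  @sarah R d n m f alpha beta eta w0 z0 J0 zs Js idx coin t.+1 =
  let st := sarah f alpha beta eta w0 z0 J0 zs Js idx coin t in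
  let w' := st.1.1 - eta *: (invmx (Dhat alpha st.2) *m st.1.2^T)^T in
  (w', if coin t.+1 then grad (Pobj f) w'
       else st.1.2 + grad (f (idx t.+1)) w' - grad (f (idx t.+1)) st.1.1,
   beta *: st.2 + (1 - beta) *: diag_hvp (radvec (zs t.+1)) (hessPJ f (Js t.+1) w')).
Proof. by rewrite /=; case: (sarah _ _ _ _ _ _ _ _ _ _ _ _) => [[w v] D]. Qed.

Lemma hist_meas (dT : measure_display) (Omega : measurableType dT) (d n m t : nat)
  (z0 : 'I_m -> Omega -> {ffun 'I_d -> bool}) (J0 : 'I_m -> Omega -> {set 'I_n})
  (zs : nat -> Omega -> {ffun 'I_d -> bool}) (Js : nat -> Omega -> {set 'I_n})
  (idx : nat -> Omega -> 'I_n) (coin : nat -> Omega -> bool) h :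
  (forall j, rv_measurable (z0 j)) -> (forall j, rv_measurable (J0 j)) ->
  (forall t, rv_measurable (zs t)) -> (forall t, rv_measurable (Js t)) ->
  (forall t, rv_measurable (idx t)) -> (forall t, rv_measurable (coin t)) ->
  measurable (history z0 J0 zs Js idx coin t @^-1` [set h]).
Proof.
move=> Mz0 MJ0 Mzs MJs Midx Mcoin.
have -> : history z0 J0 zs Js idx coin t @^-1` [set h] =
  (\bigcap_(j in [set: 'I_m]) (z0 j @^-1` [set (h.1 j).1] `&` J0 j @^-1` [set (h.1 j).2]))
  `&` (\bigcap_(s in [set: 'I_t]) (zs s.+1 @^-1` [set (h.2 s).1.1] `&` Js s.+1 @^-1` [set (h.2 s).1.2]
        `&` idx s.+1 @^-1` [set (h.2 s).2.1] `&` coin s.+1 @^-1` [set (h.2 s).2.2])).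
  apply/seteqP; split => om /=.
    move=> <-; split => j _; rewrite /history /= ffunE //.
  case: h => h1 h2 /= [H1 H2]; rewrite /history; congr pair; apply/ffunP => j; rewrite ffunE.
    by have [/= -> ->] := H1 j I; case: (h1 j).
  by have [[[/= -> ->] ->] ->] := H2 j I; case: (h2 j) => [[? ?] [? ?]].
apply: measurableI; apply: fin_bigcap_measurable => // j _.
  by apply: measurableI; [exact: Mz0 | exact: MJ0].
apply: measurableI; [apply: measurableI; [apply: measurableI|]|].
- exact: Mzs.
- exact: MJs.
- exact: Midx.
- exact: Mcoin.
Qed.

Lemma preim_false (T : Type) (g : T -> bool) : g @^-1` [set false] = ~` (g @^-1` [set true]).
Proof.
apply/seteqP; split => x /=; case: (g x) => //.
Qed.

Lemma sqnorm0 (R : realType) (d : nat) : sqnorm (0 : 'rV[R]_d) = 0.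
Proof. by rewrite /sqnorm big1 // => k _; rewrite mxE expr0n. Qed.

End Helpers.

Theorem lemma4
  (R : realType) (d n m : nat) (f : 'I_n -> 'rV[R]_d -> R) (L : R)
  (alpha beta eta p : R) (w0 : 'rV[R]_d)
  (dT : measure_display) (Omega : measurableType dT) (mu : probability Omega R)
  (z0 : 'I_m -> Omega -> {ffun 'I_d -> bool}) (J0 : 'I_m -> Omega -> {set 'I_n})
  (zs : nat -> Omega -> {ffun 'I_d -> bool}) (Js : nat -> Omega -> {set 'I_n})
  (idx : nat -> Omega -> 'I_n) (coin : nat -> Omega -> bool)
  (* the L-smoothness assumption *)
  (HfL : forall i, twice_diff_Lsmooth L (f i))
  (HPL : twice_diff_Lsmooth L (Pobj f))
  (* parameters *)
  (Hn : (0 < n)%N) (Hm : (0 < m)%N)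
  (Halpha : 0 < alpha) (Hbeta : 0 < beta < 1) (Heta : 0 < eta) (Hp : 0 < p <= 1)
  (* all random choices are random variables (discrete codomains) *)
  (Mz0 : forall j, rv_measurable (z0 j)) (MJ0 : forall j, rv_measurable (J0 j))
  (Mzs : forall t, rv_measurable (zs t)) (MJs : forall t, rv_measurable (Js t))
  (Midx : forall t, rv_measurable (idx t)) (Mcoin : forall t, rv_measurable (coin t))
  (* Rademacher vectors *)
  (Hz0 : forall j s, mu (z0 j @^-1` [set s]) = ((2 ^+ d)^-1 : R)%:E)
  (Hzs : forall t s, mu (zs t.+1 @^-1` [set s]) = ((2 ^+ d)^-1 : R)%:E)
  (* i_{t+1} uniform on [n], the coin is a Bernoulli(p) *)
  (Hidx : forall t k, mu (idx t.+1 @^-1` [set k]) = (n%:R^-1 : R)%:E)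
  (Hcoin : forall t, mu (coin t.+1 @^-1` [set true]) = p%:E)
  (* i_{t+1}, the coin at step t+1, and everything drawn before are independent *)
  (Hind : forall t A B C,
     mu (history z0 J0 zs Js idx coin t @^-1` A `&` idx t.+1 @^-1` B `&` coin t.+1 @^-1` C)
     = (mu (history z0 J0 zs Js idx coin t @^-1` A) * mu (idx t.+1 @^-1` B)
        * mu (coin t.+1 @^-1` C))%E)
  (t : nat) :
  let run om := sarah f alpha beta eta w0 (fun j => z0 j om) (fun j => J0 j om)
                  (fun s => zs s om) (fun s => Js s om) (fun s => idx s om) (fun s => coin s om) in
  let w s om := (run om s).1.1 in
  let v s om := (run om s).1.2 in
  let Dh s om := Dhat alpha (run om s).2 in
  (\int[mu]_om (sqnorm (v t.+1 om - grad (Pobj f) (w t.+1 om)))%:E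
   <= (1 - p)%:E * \int[mu]_om (sqnorm (v t om - grad (Pobj f) (w t om)))%:E
      + ((1 - p) * L ^+ 2 / alpha)%:E
        * \int[mu]_om (Dnorm2 (Dh t om) (w t.+1 om - w t om))%:E)%E.
Proof.
pose run om := sarah f alpha beta eta w0 (fun j => z0 j om) (fun j => J0 j om)
                  (fun s => zs s om) (fun s => Js s om) (fun s => idx s om) (fun s => coin s om).
pose w s om := (run om s).1.1.
pose v s om := (run om s).1.2.
pose Dh s om := Dhat alpha (run om s).2.
change (\int[mu]_om (sqnorm (v t.+1 om - grad (Pobj f) (w t.+1 om)))%:E
   <= (1 - p)%:E * \int[mu]_om (sqnorm (v t om - grad (Pobj f) (w t om)))%:E
      + ((1 - p) * L ^+ 2 / alpha)%:E
        * \int[mu]_om (Dnorm2 (Dh t om) (w t.+1 om - w t om))%:E)%E.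
pose i0 : 'I_n := Ordinal Hn.
pose H := history z0 J0 zs Js idx coin t.
pose histT := ({ffun 'I_m -> {ffun 'I_d -> bool} * {set 'I_n}} *
   {ffun 'I_t -> ({ffun 'I_d -> bool} * {set 'I_n}) * ('I_n * bool)})%type.
pose St (h : histT) := sarah f alpha beta eta w0 (fun j => (h.1 j).1) (fun j => (h.1 j).2)
    (hz h.2) (hJ h.2) (hi i0 h.2) (hc h.2) t.
pose Wf (h : histT) := (St h).1.1.
pose Vf (h : histT) := (St h).1.2.
pose Df (h : histT) := (St h).2.
pose W' (h : histT) := Wf h - eta *: (invmx (Dhat alpha (Df h)) *m (Vf h)^T)^T.
have Hrun om : sarah f alpha beta eta w0 (fun j => z0 j om) (fun j => J0 j om)
    (fun s => zs s om) (fun s => Js s om) (fun s => idx s om) (fun s => coin s om) t = St (H om).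
  exact: sarah_hist.
pose X om := (H om, idx t.+1 om, coin t.+1 om).
pose G1 (k : histT * 'I_n * bool) := sqnorm ((if k.2 then grad (Pobj f) (W' k.1.1)
   else Vf k.1.1 + grad (f k.1.2) (W' k.1.1) - grad (f k.1.2) (Wf k.1.1)) - grad (Pobj f) (W' k.1.1)).
pose F (h : histT) := sqnorm (Vf h - grad (Pobj f) (Wf h)).
pose E (h : histT) := Dnorm2 (Dhat alpha (Df h)) (W' h - Wf h).
have L1 : (\int[mu]_om (sqnorm (v t.+1 om - grad (Pobj f) (w t.+1 om)))%:E
    = \int[mu]_om (G1 (X om))%:E)%E.
  apply: eq_integral => om _.
  by rewrite /v /w /run sarahS /= Hrun.
have L2 : (\int[mu]_om (sqnorm (v t om - grad (Pobj f) (w t om)))%:E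
    = \int[mu]_om (F (H om))%:E)%E.
  apply: eq_integral => om _.
  by rewrite /v /w /run /= Hrun.
have L3 : (\int[mu]_om (Dnorm2 (Dh t om) (w t.+1 om - w t om))%:E
    = \int[mu]_om (E (H om))%:E)%E.
  apply: eq_integral => om _.
  by rewrite /Dh /w /run sarahS /= Hrun.
rewrite L1 L2 L3.
have mH h : measurable (H @^-1` [set h]) by apply: hist_meas.
have XE (k : histT * 'I_n * bool) : X @^-1` [set k] =
    H @^-1` [set k.1.1] `&` idx t.+1 @^-1` [set k.1.2] `&` coin t.+1 @^-1` [set k.2].
  case: k => [[h i] c]; apply/seteqP; split => om.
    move=> Hx; have : X om = (h, i, c) := Hx.
    rewrite /X; case=> e1 e2 e3.
    exact: (conj (conj e1 e2) e3).
  move=> [[e1 e2] e3]; change (X om = (h, i, c)).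
  by rewrite /X e1 e2 e3.
have mX k : measurable (X @^-1` [set k]).
  rewrite XE; apply: measurableI; [apply: measurableI|].
  - exact: mH.
  - exact: Midx.
  - exact: Mcoin.
pose mh (h : histT) := fine (mu (H @^-1` [set h])).
have mhE h : mu (H @^-1` [set h]) = (mh h)%:E.
  rewrite /mh fineK; first by [].
  rewrite ge0_fin_numE; last exact: measure_ge0.
  apply: (le_lt_trans (probability_le1 mu (mH h))); exact: ltry.
have mh0 h : 0 <= mh h by apply: fine_ge0; exact: measure_ge0.
pose pc (c : bool) := if c then p else 1 - p.
have muX h i c : mu (X @^-1` [set (h, i, c)]) = (mh h * n%:R^-1 * pc c)%:E.
  rewrite XE Hind Hidx mhE; case: c.
    rewrite Hcoin -!EFinM; reflexivity.
  rewrite (preim_false (coin t.+1)).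
  rewrite probability_setC; last exact: Mcoin.
  rewrite Hcoin -EFinB -!EFinM; reflexivity.
have G10 k : 0 <= G1 k by exact: sqnorm_ge0.
have F0 h : 0 <= F h by exact: sqnorm_ge0.
have E0 h : 0 <= E h.
  apply: le_trans (Dnorm_ge _ _ Halpha).
  by apply: mulr_ge0; [exact: ltW | exact: sqnorm_ge0].
rewrite (int_fin mu mX G10) (int_fin mu mH F0) (int_fin mu mH E0).
rewrite (eq_bigr (fun k => (G1 k * (mh k.1.1 * n%:R^-1 * pc k.2))%:E)); last first.
  by move=> [[h i] c] _; rewrite (muX h i c) -EFinM.
rewrite (eq_bigr (fun h => (F h * mh h)%:E)); last by move=> h _; rewrite EFinM -mhE; reflexivity.
rewrite [X in (_ + _ * X)%E](eq_bigr (fun h => (E h * mh h)%:E)); last by move=> h _; rewrite EFinM -mhE; reflexivity.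
rewrite !sumEFin -!EFinM -EFinD lee_fin.
have [p0 p1] := andP Hp.
have LHSE : \sum_(k : histT * 'I_n * bool) G1 k * (mh k.1.1 / n%:R * pc k.2)
   = \sum_(h : histT) \sum_(i < n) \sum_(c : bool) G1 (h, i, c) * (mh h / n%:R * pc c).
  rewrite pair_big pair_big.
  by apply: eq_big => // -[[h i] c].
rewrite LHSE.
rewrite !big_distrr -big_split.
apply: ler_sum => h _ /=.
have q0 : 0 <= (1 - p) * mh h by apply: mulr_ge0; [rewrite subr_ge0 | exact: mh0].
rewrite (eq_bigr (fun i => ((1 - p) * mh h) * (n%:R^-1 * G1 (h, i, false)))); last first.
  move=> i _; rewrite big_bool /=.
  have -> : G1 (h, i, true) = 0 by rewrite /G1 subrr sqnorm0.
  change (pc false) with (1 - p); change (pc true) with p.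
  ring.
rewrite -big_distrr -big_distrr.
have SB := step_bound (Vf h) (Wf h) (W' h) (Df h) Hn Halpha HfL.
apply: le_trans (ler_wpM2l q0 SB) _.
rewrite /F /E /=.
rewrite le_eqVlt; apply/orP; left; apply/eqP; ring.
Qed.
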